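(* Let $H,K$ be finitely generated abelian groups, $n,m\ge3$, and let $\sigma\colon G\to S_n$, $\sigma'\colon G'\to S_m$ be surjective homomorphisms. Let $W=H^n\rtimes_\sigma G$ and $W'=K^m\rtimes_{\sigma'}G'$, and assume that every abelian normal subgroup of $W$ is contained in $H^n$ and every abelian normal subgroup of $W'$ is contained in $K^m$. If $\Phi\colon W\to W'$ is a group isomorphism, then: (1) $\Phi(H^n)=K^m$; (2) $H^n\cong K^m$; (3) $\mathrm{rk}(H)\,n=\mathrm{rk}(K)\,m$; (4) $T(H)^n\cong T(K)^m$; (5) $G\cong G'$.
   Context: $H^n\rtimes_\sigma G$ denotes the semidirect product in which $G$ acts on $H^n$ by permuting coordinates through $\sigma$: $g\cdot(h_1,\dots,h_n)=(h_{\sigma(g)(1)},\dots,h_{\sigma(g)(n)})$ (with the composition convention making this a left action); $H^n$ is identified with $\{(\mathbf h,1)\}$. For a finitely generated abelian group $A\cong\mathbb Z^r\oplus T$ with $T$ finite, $\mathrm{rk}(A)=r$ and $T(A)=T$ is its torsion subgroup. All groups are non-trivial. *)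

(* Defs.v *)
From HB Require Import structures.
From mathcomp Require Import all_boot all_order all_algebra all_fingroup.
Set Implicit Arguments. Unset Strict Implicit. Unset Printing Implicit Defensive.
Import GRing.Theory.

Local Open Scope group_scope.

Definition is_subgroup (W : groupType) (S : W -> Prop) : Prop :=
  [/\ S 1, (forall x y, S x -> S y -> S (x * y)) & (forall x, S x -> S x^-1)].

Definition is_normal (W : groupType) (S : W -> Prop) : Prop :=
  forall x g : W, S x -> S (x ^ g).

Definition is_abelian (W : groupType) (S : W -> Prop) : Prop :=
  forall x y : W, S x -> S y -> x * y = y * x.

Definition group_iso (G G' : groupType) : Prop :=
  exists f : G -> G', bijective f /\ {morph f : x y / x * y}.

Local Close Scope group_scope.
Local Open Scope ring_scope.

Definition zmod_iso (A B : zmodType) : Prop :=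
  exists f : A -> B, bijective f /\ {morph f : x y / x + y}.

Definition zmod_iso_on (A B : zmodType) (P : A -> Prop) (Q : B -> Prop) : Prop :=
  exists f : A -> B,
    [/\ (forall x, P x -> Q (f x)),
        (forall x y, P x -> P y -> f x = f y -> x = y),
        (forall y, Q y -> exists2 x, P x & f x = y) &
        (forall x y, P x -> P y -> f (x + y) = f x + f y)].

Definition fin_generated (A : zmodType) : Prop :=
  exists s : seq A, forall x : A,
    exists c : 'I_(size s) -> int, x = \sum_(i < size s) s`_i *~ c i.

Definition is_torsion (A : zmodType) (x : A) : Prop :=
  exists k : nat, (0 < k)%N /\ x *+ k = 0.

Definition has_rank (A : zmodType) (r : nat) : Prop :=
  exists T : finZmodType, zmod_iso A ('rV[int]_r * T)%type.

(* T(A)^n as the subgroup of A^n of tuples with torsion coordinates *)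
Definition torsion_pow (A : zmodType) (n : nat) : {ffun 'I_n -> A} -> Prop :=
  fun h => forall i, is_torsion (h i).

(* carrier of H^n ><|_sigma G; it formally depends on sigma, which
   determines the group law given below *)
Definition sdprod_sigma (H : zmodType) (G : groupType) (n : nat)
  (sigma : {multiplicative G -> {perm 'I_n}}) : Type :=
  ({ffun 'I_n -> H} * G)%type.
Section Sdprod.
Variables (H : zmodType) (G : groupType) (n : nat).
Variable sigma : {multiplicative G -> {perm 'I_n}}.

(* g . h = (h_{sigma g 1}, ..., h_{sigma g n}); with MathComp's convention
   (s * t) x = t (s x) this is a left action. *)
Definition pact (g : G) (h : {ffun 'I_n -> H}) : {ffun 'I_n -> H} :=
  [ffun i => h (sigma g i)].

Local Notation sdprod_sigma := (@sdprod_sigma H G n sigma).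
HB.instance Definition _ := Choice.on sdprod_sigma.

Definition sd_mul (x y : sdprod_sigma) : sdprod_sigma :=
  (x.1 + pact x.2 y.1, (x.2 * y.2)%g).
Definition sd_one : sdprod_sigma := (0, 1%g).
Definition sd_inv (x : sdprod_sigma) : sdprod_sigma :=
  (- pact (x.2^-1)%g x.1, (x.2^-1)%g).

Lemma sigma1 : sigma 1%g = 1%g.
Proof.
apply: (@mulIg _ (sigma 1%g)).
by rewrite -gmulfM !mul1g.
Qed.

Lemma pact1 h : pact 1%g h = h.
Proof. by apply/ffunP => i; rewrite ffunE sigma1 perm1. Qed.

Lemma pactM g g' h : pact g (pact g' h) = pact (g * g')%g h.
Proof. by apply/ffunP => i; rewrite !ffunE gmulfM permM. Qed.

Lemma pactD g h h' : pact g (h + h') = pact g h + pact g h'.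
Proof. by apply/ffunP => i; rewrite !ffunE. Qed.

Lemma pact0 g : pact g 0 = 0.
Proof. by apply/ffunP => i; rewrite !ffunE. Qed.

Lemma pactN g h : pact g (- h) = - pact g h.
Proof. by apply/ffunP => i; rewrite !ffunE. Qed.

Fact sd_mulA : associative sd_mul.
Proof.
case=> h1 g1 [h2 g2] [h3 g3]; rewrite /sd_mul /=.
by rewrite pactD pactM addrA mulgA.
Qed.

Fact sd_mul1 : left_id sd_one sd_mul.
Proof. by case=> h g; rewrite /sd_mul /= add0r pact1 mul1g. Qed.

Fact sd_mulg1 : right_id sd_one sd_mul.
Proof. by case=> h g; rewrite /sd_mul /= pact0 addr0 mulg1. Qed.

Fact sd_mulV : left_inverse sd_one sd_inv sd_mul.
Proof.
case=> h g; rewrite /sd_mul /sd_inv /sd_one /=.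
by rewrite addNr mulVg.
Qed.

Fact sd_mulgV : right_inverse sd_one sd_inv sd_mul.
Proof.
case=> h g; rewrite /sd_mul /sd_inv /sd_one /=.
by rewrite pactN pactM !mulgV pact1 subrr.
Qed.

HB.instance Definition _ := isGroup.Build sdprod_sigma
  sd_mulA sd_mul1 sd_mulg1 sd_mulV sd_mulgV.

Definition base_sub : sdprod_sigma -> Prop := fun x => x.2 = 1%g.

End Sdprod.

Arguments sdprod_sigma H {G n} sigma.

(* Main.v *)
Require Import Defs.
From HB Require Import structures.
From mathcomp Require Import all_boot all_order all_algebra all_fingroup.
From mathcomp Require Import cyclic.
Import GRing.Theory Num.Theory.
Set Implicit Arguments. Unset Strict Implicit. Unset Printing Implicit Defensive.

Local Open Scope group_scope.

Section GenGroup.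
Variables (W W' : groupType) (f : W -> W') (fM : {morph f : x y / x * y}).
Lemma morph1 : f 1 = 1.
Proof. by apply: (@mulgI _ (f 1)); rewrite -fM !mulg1. Qed.
Lemma morphV x : f x^-1 = (f x)^-1.
Proof. by apply: (@mulgI _ (f x)); rewrite -fM !mulgV morph1. Qed.
Lemma morphJ x g : f (x ^ g) = f x ^ f g.
Proof. by rewrite !conjgE !fM morphV. Qed.
Lemma inv_morph (f' : W' -> W) : cancel f f' -> cancel f' f -> {morph f' : x y / x * y}.
Proof. by move=> K1 K2 x y; apply: (can_inj K1); rewrite fM !K2. Qed.
Lemma pull_sub (B : W' -> Prop) : is_subgroup B -> is_subgroup (fun x => B (f x)).
Proof.
case=> B1 BM BV; split; first by rewrite morph1.
  by move=> x y Hx Hy; rewrite fM; apply: BM.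
by move=> x Hx; rewrite morphV; apply: BV.
Qed.
Lemma pull_normal (B : W' -> Prop) : is_normal B -> is_normal (fun x => B (f x)).
Proof. by move=> BN x g Hx; rewrite morphJ; apply: BN. Qed.
Lemma pull_abelian (B : W' -> Prop) : injective f -> is_abelian B -> is_abelian (fun x => B (f x)).
Proof. by move=> fI BA x y Hx Hy; apply: fI; rewrite !fM BA. Qed.
End GenGroup.

Section Sd.
Variables (H : zmodType) (G : groupType) (n : nat) (sigma : {multiplicative G -> {perm 'I_n}}).
Local Notation W := (sdprod_sigma H sigma).
Lemma sdM (x y : W) : x * y = ((x.1 + pact sigma x.2 y.1)%R, x.2 * y.2).
Proof. by []. Qed.
Lemma sdV (x : W) : x^-1 = ((- pact sigma x.2^-1 x.1)%R, x.2^-1).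
Proof. by []. Qed.
Lemma sd1 : (1 : W) = (0%R, 1).
Proof. by []. Qed.
Lemma base_subgroup : is_subgroup (@base_sub H G n sigma).
Proof.
rewrite /base_sub; split=> //.
  by move=> x y; rewrite sdM /= => -> ->; rewrite mulg1.
by move=> x; rewrite sdV /= => ->; rewrite invg1.
Qed.
Lemma base_normal : is_normal (@base_sub H G n sigma).
Proof. by move=> x g; rewrite /base_sub conjgE !sdM sdV /= => ->; rewrite mul1g mulVg. Qed.
Lemma base_abelian : is_abelian (@base_sub H G n sigma).
Proof.
move=> [h g] [k g'] /=; rewrite /base_sub /= => -> ->.
by rewrite !sdM /= !pact1 addrC.
Qed.
Lemma base_eta (x : W) : base_sub x -> x = (x.1, 1).
Proof. by case: x => h g; rewrite /base_sub /= => ->. Qed.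
Lemma sdM_base (h k : {ffun 'I_n -> H}) : ((h, 1) : W) * (k, 1) = ((h + k)%R, 1).
Proof. by rewrite sdM /= pact1 mulg1. Qed.
End Sd.

Local Close Scope group_scope.
Local Open Scope ring_scope.

Section Add.
Variables (A B : zmodType) (f : A -> B) (fD : {morph f : x y / x + y}).
Lemma add0 : f 0 = 0.
Proof. by apply: (@addrI _ (f 0)); rewrite -fD !addr0. Qed.
Lemma addN x : f (- x) = - f x.
Proof. by apply: (@addrI _ (f x)); rewrite -fD !subrr add0. Qed.
Lemma addB x y : f (x - y) = f x - f y.
Proof. by rewrite fD addN. Qed.
Lemma addMn x k : f (x *+ k) = f x *+ k.
Proof. by elim: k => [|k IH]; rewrite ?mulr0n ?add0 // !mulrS fD IH. Qed.
Lemma addMz x z : f (x *~ z) = f x *~ z.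
Proof. by case: z => k; rewrite ?NegzE ?mulrNz -?pmulrn ?addN addMn. Qed.
Lemma addsum (I : Type) (r : seq I) (P : pred I) (F : I -> A) :
  f (\sum_(i <- r | P i) F i) = \sum_(i <- r | P i) f (F i).
Proof. exact: (big_morph f fD add0). Qed.
Lemma tors_morph x : is_torsion x -> is_torsion (f x).
Proof. by case=> k [k0 xk]; exists k; split=> //; rewrite -addMn xk add0. Qed.
Lemma inv_add (f' : B -> A) : cancel f f' -> cancel f' f -> {morph f' : x y / x + y}.
Proof. by move=> K1 K2 x y; apply: (can_inj K1); rewrite fD !K2. Qed.
End Add.

Lemma tors_powP (A : zmodType) n (h : {ffun 'I_n -> A}) :
  torsion_pow h <-> is_torsion h.
Proof.
split.
  move=> th; have [k Hk] := fin_all_exists th.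
  exists (\prod_i k i)%N; split.
    by rewrite prodn_gt0 // => i; case: (Hk i).
  apply/ffunP => i; rewrite ffunMnE ffunE (bigD1 i) //= mulrnA.
  by case: (Hk i) => _ ->; rewrite mul0rn.
case=> k [k0 hk] i; exists k; split=> //.
by rewrite -ffunMnE hk ffunE.
Qed.

Lemma fin_tors (T : finZmodType) (t : T) : t *+ #|T| = 0.
Proof.
have := @expg_cardG T [set: T]%G t (in_setT t).
by rewrite cardsT.
Qed.

Lemma rV_tors r (v : 'rV[int]_r) : is_torsion v -> v = 0.
Proof.
case=> k [k0 vk]; apply/matrixP => i j.
have := congr1 (fun M : 'rV[int]_r => M i j) vk; rewrite /= mulmxnE mxE => /eqP.
by rewrite mulrn_eq0 eqn0Ngt k0 /= => /eqP.
Qed.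

Lemma add_linear a b (g : 'rV[int]_a -> 'rV[int]_b) (gD : {morph g : x y / x + y}) w :
  g w = w *m \matrix_i g (delta_mx 0 i).
Proof.
rewrite mulmx_sum_row {1}(row_sum_delta w) (addsum gD).
apply: eq_bigr => j _; rewrite rowK -[w 0 j]intz !scaler_int.
exact: addMz.
Qed.

Lemma rank_le a b (g : 'rV[int]_a -> 'rV[int]_b) (g' : 'rV[int]_b -> 'rV[int]_a)
  (gD : {morph g : x y / x + y}) (gD' : {morph g' : x y / x + y})
  (gK : cancel g g') : (a <= b)%N.
Proof.
set M := \matrix_i g (delta_mx 0 i).
set M' := \matrix_i g' (delta_mx 0 i).
have MM : M *m M' = 1%:M.
  apply/row_matrixP => i; rewrite row_mul rowK -(add_linear gD') gK.
  by rewrite row1.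
have := congr1 (map_mx (intr : int -> rat)) MM.
rewrite map_mxM map_mx1 => MMQ.
rewrite -[X in (X <= _)%N](mxrank1 rat a) -MMQ.
exact: leq_trans (mxrankM_maxl _ _) (rank_leq_col _).
Qed.

Lemma mx_rank_le n r m s (g : 'M[int]_(n,r) -> 'M[int]_(m,s)) g'
  (gD : {morph g : x y / x + y}) (gD' : {morph g' : x y / x + y})
  (gK : cancel g g') : (n * r <= m * s)%N.
Proof.
apply: (@rank_le _ _ (fun v => mxvec (g (vec_mx v))) (fun w => mxvec (g' (vec_mx w)))).
- by move=> x y; rewrite !linearD /= gD linearD.
- by move=> x y; rewrite !linearD /= gD' linearD.
by move=> v; rewrite mxvecK gK vec_mxK.
Qed.

Lemma pair_add (U V : zmodType) (a b : U) (c d : V) : (a, c) + (b, d) = (a + b, c + d).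
Proof. by []. Qed.

Lemma pair_tors (U : zmodType) (V : finZmodType) (t : V) : (0 : U, t) *+ #|V| = 0.
Proof.
have e1 := addMn (f := fst) (fun _ _ => erefl) (0 : U, t) #|V|.
have e2 := addMn (f := snd) (fun _ _ => erefl) (0 : U, t) #|V|.
move: e1 e2; case: ((0 : U, t) *+ #|V|) => a b /= -> ->.
by rewrite mul0rn fin_tors.
Qed.

Section Plumb.
Variables (A B : zmodType) (n m r s : nat) (TA TB : finZmodType).
Variables (F : {ffun 'I_n -> A} -> {ffun 'I_m -> B}) (F' : {ffun 'I_m -> B} -> {ffun 'I_n -> A}).
Hypotheses (FD : {morph F : x y / x + y}) (F'D : {morph F' : x y / x + y}) (FK : cancel F F').
Variables (pA : A -> 'rV[int]_r * TA) (qA : 'rV[int]_r * TA -> A).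
Hypotheses (pAD : {morph pA : x y / x + y}) (qAD : {morph qA : x y / x + y}).
Hypotheses (pAK : cancel pA qA) (qAK : cancel qA pA).
Variables (pB : B -> 'rV[int]_s * TB) (qB : 'rV[int]_s * TB -> B).
Hypotheses (pBD : {morph pB : x y / x + y}) (qBD : {morph qB : x y / x + y}).
Hypotheses (pBK : cancel pB qB) (qBK : cancel qB pB).

Definition gmap (M : 'M[int]_(n, r)) : 'M[int]_(m, s) :=
  \matrix_(j < m) (pB (F [ffun i => qA (row i M, 0)] j)).1.
Definition gmap' (N : 'M[int]_(m, s)) : 'M[int]_(n, r) :=
  \matrix_(i < n) (pA (F' [ffun j => qB (row j N, 0)] i)).1.

Lemma gmapD : {morph gmap : x y / x + y}.
Proof.
move=> M N; apply/row_matrixP => j; rewrite /gmap rowK linearD /= !rowK.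
have -> : [ffun i => qA (row i (M + N), 0)] =
   [ffun i => qA (row i M, 0)] + [ffun i => qA (row i N, 0)].
  by apply/ffunP => i; rewrite !ffunE linearD -qAD pair_add addr0.
by rewrite FD ffunE pBD.
Qed.

Lemma gmapD' : {morph gmap' : x y / x + y}.
Proof.
move=> M N; apply/row_matrixP => j; rewrite /gmap' rowK linearD /= !rowK.
have -> : [ffun i => qB (row i (M + N), 0)] =
   [ffun i => qB (row i M, 0)] + [ffun i => qB (row i N, 0)].
  by apply/ffunP => i; rewrite !ffunE linearD -qBD pair_add addr0.
by rewrite F'D ffunE pAD.
Qed.

Lemma gmapK : cancel gmap gmap'.
Proof.
move=> M; apply/row_matrixP => i; rewrite rowK.
set h := [ffun i => qA (row i M, 0)].
set tau := [ffun j => qB (0, (pB (F h j)).2)].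
have E : [ffun j => qB (row j (gmap M), 0)] = F h - tau.
  apply/ffunP => j; rewrite !ffunE rowK -[F h j]pBK.
  case: (pB (F h j)) => x t /=.
  by rewrite qBK /=; apply/eqP; rewrite eq_sym subr_eq -qBD pair_add addr0 add0r.
have ttau : is_torsion tau.
  exists #|TB|; split; first by apply/card_gt0P; exists 0.
  apply/ffunP => j; rewrite ffunMnE !ffunE -addMn // pair_tors.
  by rewrite (add0 qBD).
rewrite E (addB F'D) FK ffunE ffunE pAD ffunE (addN pAD) qAK /=.
set z := (pA _).1.
have -> : z = 0; last by rewrite subr0.
apply: rV_tors; rewrite /z.
apply: (tors_morph (f := fst)) => //.
apply: (tors_morph pAD).
have := tors_morph F'D ttau; move/tors_powP; exact.
Qed.

Lemma plumb_le : (r * n <= s * m)%N.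
Proof. by rewrite mulnC [(s * m)%N]mulnC; exact: mx_rank_le gmapD gmapD' gmapK. Qed.
End Plumb.

Local Close Scope ring_scope.
Local Open Scope group_scope.

Lemma quot_cancel (H K : zmodType) (G G' : groupType) (n m : nat)
  (sigma : {multiplicative G -> {perm 'I_n}})
  (sigma' : {multiplicative G' -> {perm 'I_m}})
  (Phi : sdprod_sigma H sigma -> sdprod_sigma K sigma') Phi'
  (K1 : cancel Phi Phi') (K2 : cancel Phi' Phi) (Phi'M : {morph Phi' : x y / x * y})
  (B2 : forall y, base_sub y -> base_sub (Phi' y)) :
  cancel (fun g => (Phi (0%R, g)).2) (fun g' => (Phi' (0%R, g')).2).
Proof.
move=> g /=; set P := Phi (0%R, g).
have E : P = ((P.1, 1) : sdprod_sigma K sigma') * (0%R, P.2) by rewrite sdM /= pact0 addr0 mul1g; case: P.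
have := congr1 (fun x => (Phi' x).2) E.
rewrite Phi'M sdM /= (B2 (P.1, 1)) // mul1g => <-.
by rewrite /P K1.
Qed.

Theorem theorem3p19 (H K : zmodType) (G G' : groupType) (n m : nat)
  (sigma : {multiplicative G -> {perm 'I_n}})
  (sigma' : {multiplicative G' -> {perm 'I_m}})
  (fgH : fin_generated H) (fgK : fin_generated K)
  (n_ge3 : (3 <= n)%N) (m_ge3 : (3 <= m)%N)
  (sigma_surj : forall p : {perm 'I_n}, exists g : G, sigma g = p)
  (sigma'_surj : forall p : {perm 'I_m}, exists g : G', sigma' g = p)
  (hW : forall S : sdprod_sigma H sigma -> Prop,
      is_subgroup S -> is_normal S -> is_abelian S ->
      forall x, S x -> base_sub x)
  (hW' : forall S : sdprod_sigma K sigma' -> Prop,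
      is_subgroup S -> is_normal S -> is_abelian S ->
      forall x, S x -> base_sub x)
  (Phi : sdprod_sigma H sigma -> sdprod_sigma K sigma')
  (Phi_bij : bijective Phi) (Phi_morph : {morph Phi : x y / x * y}) :
  [/\ (forall y, (exists2 x, base_sub x & Phi x = y) <-> base_sub y),
      zmod_iso {ffun 'I_n -> H} {ffun 'I_m -> K},
      (forall r s : nat, has_rank H r -> has_rank K s -> (r * n = s * m)%N),
      zmod_iso_on (@torsion_pow H n) (@torsion_pow K m) &
      group_iso G G'].
Proof.
case: Phi_bij => Phi' K1 K2.
have Phi'M := inv_morph Phi_morph K1 K2.
have B1 : forall x, base_sub x -> base_sub (Phi x).
  move=> x bx; apply: (hW' (fun y => base_sub (Phi' y))); last by rewrite K1.
  - exact: (pull_sub Phi'M (base_subgroup _ _)).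
  - exact: (@pull_normal _ _ _ Phi'M _ (@base_normal _ _ _ _)).
  - exact: (@pull_abelian _ _ _ Phi'M _ (can_inj K2) (@base_abelian _ _ _ _)).
have B2 : forall y, base_sub y -> base_sub (Phi' y).
  move=> y yb; apply: (hW (fun x => base_sub (Phi x))); last by rewrite K2.
  - exact: (pull_sub Phi_morph (base_subgroup _ _)).
  - exact: (@pull_normal _ _ _ Phi_morph _ (@base_normal _ _ _ _)).
  - exact: (@pull_abelian _ _ _ Phi_morph _ (can_inj K1) (@base_abelian _ _ _ _)).
pose F (h : {ffun 'I_n -> H}) := (Phi (h, 1)).1.
pose F' (k : {ffun 'I_m -> K}) := (Phi' (k, 1)).1.
have FK : cancel F F'.
  by move=> h; rewrite /F /F' -(base_eta (B1 (h, 1) erefl)) K1.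
have F'K : cancel F' F.
  by move=> k; rewrite /F /F' -(base_eta (B2 (k, 1) erefl)) K2.
have FD : {morph F : x y / (x + y)%R}.
  move=> x y; rewrite /F -sdM_base Phi_morph sdM /=.
  by rewrite (B1 (x, 1) erefl) pact1.
have F'D : {morph F' : x y / (x + y)%R} := inv_add FD FK F'K.
split.
- move=> y; split; first by case=> x bx <-; apply: B1.
  by move=> yb; exists (Phi' y); [apply: B2 | apply: K2].
- by exists F; split=> //; exists F'.
- move=> r s [TA [pA [[qA pAK qAK] pAD]]] [TB [pB [[qB pBK qBK] pBD]]].
  have qAD := inv_add pAD pAK qAK; have qBD := inv_add pBD pBK qBK.
  apply/eqP; rewrite eqn_leq; apply/andP; split.
    exact: (plumb_le FD F'D FK pAD qAD qAK pBD qBD pBK qBK).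
  exact: (plumb_le F'D FD F'K pBD qBD qBK pAD qAD pAK qAK).
- exists F; split.
  + move=> x /(tors_powP x) tx; apply/(tors_powP (F x)).
    exact: (tors_morph FD tx).
  + by move=> x y _ _ /(can_inj FK).
  + move=> y /(tors_powP y) ty; exists (F' y); last exact: F'K.
    by apply/(tors_powP (F' y)); exact: (tors_morph F'D ty).
  + by move=> x y _ _; apply: FD.
exists (fun g => (Phi (0%R, g)).2); split.
  exists (fun g' => (Phi' (0%R, g')).2).
    exact: quot_cancel K1 K2 Phi'M B2.
  exact: quot_cancel K2 K1 Phi_morph B1.
move=> g g' /=.
have -> : ((0%R, g * g') : sdprod_sigma H sigma) = ((0%R, g) : sdprod_sigma H sigma) * (0%R, g').
  by rewrite sdM /= pact0 addr0.
by rewrite Phi_morph sdM.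
Qed.
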